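(* Let $b\ge 1$, $k\ge 1$, $1\le s\le k$ be integers. Then $\sigma_{k}^{(b+1)}(t;s)=\sigma_{k}^{(b)}(t;s)$ for every integer $t$.
   Context: For a positive integer $m$, $(q)_m=(1-q)\cdots(1-q^m)$, $(q)_0=1$. For integers $b\ge 0$, $k\ge1$ and $1\le s\le k$, let $R^{(b)}_{k,s}(q)=\sum_{t=0}^{k-1}\sigma^{(b)}_k(t;s)q^t$ be the remainder of $\frac{1}{k^b}(q)_{k-1}^{\,b}(q)_{s-1}$ upon division by $1-q^k$; the values $\sigma^{(b)}_k(t;s)$ are extended to all integers $t$ by $k$-periodicity. *)

(* Defs.v *)
From mathcomp Require Import all_boot all_order all_algebra.
Set Implicit Arguments. Unset Strict Implicit. Unset Printing Implicit Defensive.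
Import GRing.Theory Num.Theory.
Local Open Scope ring_scope.

Definition qpoch (m : nat) : {poly rat} := \prod_(1 <= i < m.+1) (1 - 'X^i).

Definition Rrem (b k s : nat) : {poly rat} :=
  ((k%:R ^- b) *: (qpoch k.-1 ^+ b * qpoch s.-1)) %% (1 - 'X^k).

(* sigma^{(b)}_k(t;s) : coefficient of q^t for 0 <= t < k, extended k-periodically to t : int *)
Definition sigma (b k s : nat) (t : int) : rat :=
  (Rrem b k s)`_(absz (t %% (k%:Z))%Z).

(* Main.v *)
Require Import Defs.
From mathcomp Require Import all_boot all_order all_algebra all_field.
Import GRing.Theory Num.Theory.
Local Open Scope ring_scope.

Lemma prim_prod (k : nat) (z : algC) : k.-primitive_root z ->
  \prod_(1 <= i < k) (1 - z ^+ i) = k%:R.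
Proof.
move=> pz; have k0 := prim_order_gt0 pz.
have h1 := factor_Xn_sub_1 pz.
have h2 : ('X : {poly algC}) ^+ k - 1 = ('X - 1%:P) * \sum_(i < k) 'X ^+ (k.-1 - i) * 1%:P ^+ i.
  by rewrite -subrXX polyC1 expr1n.
rewrite h2 big_ltn // expr0 in h1.
move: h1 => /(mulfI (monic_neq0 (monicXsubC 1))) /(congr1 (horner^~ 1)).
rewrite horner_prod horner_sum.
under eq_bigr do rewrite hornerXsubC.
under [X in _ = X -> _]eq_bigr do rewrite expr1n mulr1 hornerXn expr1n.
move=> ->; by rewrite sumr_const card_ord.
Qed.

Lemma root_val (k : nat) (z : algC) : (0 < k)%N -> z ^+ k = 1 ->
  \prod_(1 <= i < k) (1 - z ^+ i) * (\prod_(1 <= i < k) (1 - z ^+ i) - k%:R) = 0.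
Proof.
move=> k0 zk.
have [m pm mk] := prim_order_exists k0 zk.
have m0 := prim_order_gt0 pm.
have [/eqP mk'|] := boolP (m == k).
  by rewrite -mk' (@prim_prod m z pm) subrr mulr0.
move=> nmk.
have mlt : (m < k)%N by rewrite ltn_neqAle nmk dvdn_leq.
suff -> : \prod_(1 <= i < k) (1 - z ^+ i) = 0 by rewrite mul0r.
apply/eqP; rewrite prodf_seq_eq0; apply/hasP; exists m.
  by rewrite mem_index_iota m0.
by rewrite prim_expr_order // subrr eqxx.
Qed.
From mathcomp Require Import ring.

Lemma map_qpoch m : map_poly (ratr : rat -> algC) (qpoch m) = \prod_(1 <= i < m.+1) (1 - 'X^i).
Proof.
rewrite /qpoch rmorph_prod; apply: eq_bigr => i _.
by rewrite rmorphB rmorph1 rmorphXn /= map_polyX.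
Qed.

Lemma dvdD (k : nat) : (0 < k)%N ->
  (1 - 'X^k) %| qpoch k.-1 * (qpoch k.-1 - (k%:R)%:P).
Proof.
move=> k0.
rewrite -(dvdp_map (ratr : {rmorphism rat -> algC})).
set Pc : {poly algC} := \prod_(1 <= i < k) (1 - 'X^i).
have e1 : map_poly (ratr : {rmorphism rat -> algC}) (qpoch k.-1 * (qpoch k.-1 - (k%:R)%:P)) = Pc * (Pc - (k%:R)%:P).
  rewrite rmorphM rmorphB /= map_polyC /= rmorph_nat.
  by rewrite map_qpoch prednK.
have e2 : map_poly (ratr : {rmorphism rat -> algC}) (1 - 'X^k) = - ('X^k - 1).
  by rewrite rmorphB rmorph1 rmorphXn /= map_polyX opprB.
rewrite e1 e2 dvdpNl.
have [z pz] := C_prim_root_exists k0.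
rewrite -(factor_Xn_sub_1 pz).
have -> : \prod_(0 <= i < k) ('X - (z ^+ i)%:P) = \prod_(w <- [seq z^+i | i <- index_iota 0 k]) ('X - w%:P) by rewrite big_map.
apply: uniq_roots_dvdp.
  apply/allP => w /mapP [i _ ->].
  rewrite /root hornerM hornerD hornerN hornerC /Pc horner_prod.
  under eq_bigr do rewrite hornerD hornerN hornerC hornerXn.
  have hz : (z ^+ i) ^+ k = 1 by rewrite exprAC (prim_expr_order pz) expr1n.
  by rewrite (@root_val k _ k0 hz).
rewrite uniq_rootsE map_inj_in_uniq ?iota_uniq // => i j.
rewrite !mem_index_iota => /andP[_ ik] /andP[_ jk] /eqP.
by rewrite (eq_prim_root_expr pz) !modn_small // => /eqP.
Qed.

Theorem corollary2p7 (b k s : nat) (t : int) :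
  (1 <= b)%N -> (1 <= k)%N -> (1 <= s <= k)%N ->
  sigma b.+1 k s t = sigma b k s t.
Proof.
move=> b1 k1 _.
rewrite /sigma /Rrem; congr (_`_ _).
set P := qpoch k.-1; set Q := qpoch s.-1.
set A := _ *: _; set B := _ *: (_ * Q).
suff H : (1 - 'X^k) %| A - B by rewrite -(subrK B A) modpD (modp_eq0 H) add0r.
case: b b1 @A @B => // b _ A B.
set c := (k%:R : rat)^-1.
have ck : c%:P * (k%:R)%:P = 1 :> {poly rat}.
  by rewrite -polyCM mulVf ?pnatr_eq0 -?lt0n.
have eAB : A - B = (c ^+ b.+2)%:P * (P ^+ b * Q) * (P * (P - (k%:R)%:P)).
  rewrite /A /B -!exprVn -/c -!mul_polyC !polyC_exp.
  move: ck; set C := c%:P; set K : {poly rat} := (k%:R)%:P => ck.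
  have -> : C ^+ b.+2 * (P ^+ b.+2 * Q) - C ^+ b.+1 * (P ^+ b.+1 * Q) =
    C ^+ b.+2 * (P ^+ b * Q) * (P * (P - K)) + C ^+ b.+1 * P ^+ b.+1 * Q * (C * K - 1).
  rewrite !exprS; move: (C ^+ b) (P ^+ b) => Cb Pb; ring.
  by rewrite ck subrr mulr0 addr0.
rewrite eAB; apply: dvdp_mull; exact: dvdD.
Qed.
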